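(* Let $\sigma>0$, $\mu\in\mathbb{R}$, $\rho(x)=\frac1{\sqrt{2\pi\sigma^2}}e^{-\frac{(x-\mu)^2}{2\sigma^2}}$ and $\alpha_n=\int_\mathbb{R}\psi_n(x)\rho(x)\,\mathrm{d}x$ for $n\in\mathbb{N}\cup\{0\}$. Let $$\lambda=\begin{cases}\frac14\log\left|\frac{\sigma^2+1}{\sigma^2-1}\right|,&\text{if }\sigma^2\neq1,\\ \frac14,&\text{if }\sigma^2=1.\end{cases}$$ If $N\in\mathbb{N}$ satisfies $$N\ge\begin{cases}\frac{32\mu^2}{|\sigma^4-1|}\left(\log\left|\frac{\sigma^2+1}{\sigma^2-1}\right|\right)^{-2},&\text{if }\sigma^2\neq1,\\ \frac{e^{3/2}\mu^2}{2},&\text{if }\sigma^2=1,\end{cases}$$ then $$\left(\sum_{n=N}^\infty\alpha_n^2\right)^{1/2}\le\frac{1}{\pi^{1/4}\sqrt{(\sigma^2+1)(1-e^{-2\lambda})}}e^{-\frac{\mu^2}{2(\sigma^2+1)}-\lambda N}.$$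
   Context: $H_n$ is the $n$-th physicist's Hermite polynomial and $\psi_n(x)=\frac{1}{\sqrt{\sqrt\pi\,2^n n!}}e^{-x^2/2}H_n(x)$ are the Hermite functions. *)

(* Defs.v *)
From Stdlib Require Import Reals.
From Coquelicot Require Import Coquelicot.
Open Scope R_scope.

(* physicist's Hermite polynomials: hermite_pair n x = (H_n x, H_{n+1} x),
   H_0 = 1, H_1 = 2x, H_{m+2} = 2x H_{m+1} - 2(m+1) H_m *)
Fixpoint hermite_pair (n : nat) (x : R) : R * R :=
  match n with
  | O => (1, 2 * x)
  | S m => let p := hermite_pair m x in
           (snd p, 2 * x * snd p - 2 * INR (S m) * fst p)
  end.

Definition hermite (n : nat) (x : R) : R := fst (hermite_pair n x).

Definition hermite_fun (n : nat) (x : R) : R :=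
  / sqrt (sqrt PI * 2 ^ n * INR (Factorial.fact n)) * exp (- x ^ 2 / 2) * hermite n x.

Definition gauss (sigma mu x : R) : R :=
  / sqrt (2 * PI * sigma ^ 2) * exp (- (x - mu) ^ 2 / (2 * sigma ^ 2)).

Definition alpha (sigma mu : R) (n : nat) : R :=
  RInt_gen (fun x => hermite_fun n x * gauss sigma mu x)
    (Rbar_locally m_infty) (Rbar_locally p_infty).

Definition lam (sigma : R) : R :=
  if Req_EM_T (sigma ^ 2) 1 then / 4
  else / 4 * ln (Rabs ((sigma ^ 2 + 1) / (sigma ^ 2 - 1))).

Definition N_bound (sigma mu : R) : R :=
  if Req_EM_T (sigma ^ 2) 1 then exp (3 / 2) * mu ^ 2 / 2
  else 32 * mu ^ 2 / Rabs (sigma ^ 4 - 1)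
       * / (ln (Rabs ((sigma ^ 2 + 1) / (sigma ^ 2 - 1)))) ^ 2.

(* Main.v *)
Require Import Defs.
From Stdlib Require Import Reals Lra Lia Psatz.
From Coquelicot Require Import Coquelicot.
Open Scope R_scope.

Lemma deriv_eq (f : R -> R) (x l l' : R) : is_derive f x l -> l = l' -> is_derive f x l'.
Proof. intros H ->; exact H. Qed.

Lemma hermite_0 x : hermite 0 x = 1.
Proof. reflexivity. Qed.

Lemma hermite_1 x : hermite 1 x = 2 * x.
Proof. reflexivity. Qed.

Lemma hermite_SS n x :
  hermite (S (S n)) x = 2 * x * hermite (S n) x - 2 * INR (S n) * hermite n x.
Proof. reflexivity. Qed.

Lemma hermite_S n x :
  hermite (S n) x = 2 * x * hermite n x - 2 * INR n * hermite (pred n) x.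
Proof.
  destruct n as [|n].
  - rewrite hermite_1, hermite_0. simpl. ring.
  - rewrite hermite_SS. reflexivity.
Qed.

Lemma hermite_deriv_aux n :
  (forall x, is_derive (hermite n) x (2 * INR n * hermite (pred n) x)) /\
  (forall x, is_derive (hermite (S n)) x (2 * INR (S n) * hermite n x)).
Proof.
  induction n as [|n [IH1 IH2]].
  - split; intro x.
    + apply is_derive_ext with (f := fun _ => 1). { intro; reflexivity. }
      eapply deriv_eq. { apply is_derive_const. } simpl. unfold zero; simpl. ring.
    + apply is_derive_ext with (f := fun t => 2 * t). { intro; reflexivity. }
      eapply deriv_eq. { auto_derive; auto. } rewrite hermite_0. simpl. ring.
  - split; [exact IH2|]. intro x.
    apply is_derive_ext with
      (f := fun t => 2 * t * hermite (S n) t - 2 * INR (S n) * hermite n t).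
    { intro t. rewrite hermite_SS. reflexivity. }
    eapply deriv_eq.
    { apply @is_derive_minus.
      - apply (is_derive_mult (fun t => 2 * t) (hermite (S n))).
        + auto_derive; auto.
        + apply IH2.
        + intros; apply Rmult_comm.
      - apply is_derive_scal. apply IH1. }
    simpl pred.
    assert (HS: INR (S (S n)) = INR (S n) + 1) by apply S_INR.
    assert (HS': INR (S n) = INR n + 1) by apply S_INR.
    rewrite HS, HS', (hermite_S n x).
    unfold minus, plus, opp, mult; simpl. ring.
Qed.

Lemma hermite_deriv n x : is_derive (hermite n) x (2 * INR n * hermite (pred n) x).
Proof. apply hermite_deriv_aux. Qed.

Lemma hermite_cont n x : continuous (hermite n) x.
Proof. apply (@ex_derive_continuous R_AbsRing R_NormedModule (hermite n)). eexists. apply hermite_deriv. Qed.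

Lemma sum_ge_last (f : nat -> R) n : (forall i, 0 <= f i) -> f n <= sum_f_R0 f n.
Proof.
  intros Hf. destruct n as [|n].
  - simpl. lra.
  - rewrite tech5. pose proof (cond_pos_sum f n Hf). lra.
Qed.

Lemma pow_div_fact_le_exp y n : 0 <= y -> y ^ n / INR (Factorial.fact n) <= exp y.
Proof.
  intros Hy. eapply Rle_trans; [|apply (exp_ge_taylor y n Hy)].
  apply (sum_ge_last (fun k => y ^ k / INR (Factorial.fact k))).
  intro i. apply Rmult_le_pos; [apply pow_le; lra|].
  left; apply Rinv_0_lt_compat, INR_fact_lt_0.
Qed.

Lemma pow_le_fact_exp y n : 0 <= y -> y ^ n <= INR (Factorial.fact n) * exp y.
Proof.
  intros Hy. pose proof (pow_div_fact_le_exp y n Hy) as H.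
  pose proof (INR_fact_lt_0 n).
  unfold Rdiv in H. apply Rmult_le_compat_l with (r := INR (Factorial.fact n)) in H; [|lra].
  rewrite <- Rmult_assoc, (Rmult_comm (INR (Factorial.fact n))), Rmult_assoc, Rinv_r in H; lra.
Qed.

Lemma hermite_bound_aux n x :
  Rabs (hermite n x) <= (2 * Rabs x + 2 * INR n) ^ n /\
  Rabs (hermite (S n) x) <= (2 * Rabs x + 2 * INR (S n)) ^ (S n).
Proof.
  pose proof (Rabs_pos x) as Hx.
  induction n as [|n [IH1 IH2]].
  - rewrite hermite_0, hermite_1. simpl. rewrite Rabs_R1. split; [lra|].
    rewrite Rabs_mult, Rabs_right by lra. lra.
  - split; [exact IH2|].
    rewrite hermite_SS.
    set (Y := 2 * Rabs x + 2 * INR (S n)).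
    assert (HY : 2 * Rabs x + 2 * INR n <= Y) by (unfold Y; rewrite S_INR; lra).
    assert (Hn0 : 0 <= INR n) by apply pos_INR.
    assert (HY1 : 2 * INR (S n) <= Y) by (unfold Y; lra).
    assert (HY2 : 2 <= Y) by (unfold Y; rewrite S_INR; lra).
    assert (Hp : (2 * Rabs x + 2 * INR n) ^ n <= Y ^ n).
    { apply pow_incr. lra. }
    assert (Hq : Y ^ S n <= (Y + 2) ^ S n) by (apply pow_incr; lra).
    replace (2 * Rabs x + 2 * INR (S (S n))) with (Y + 2) by (unfold Y; rewrite (S_INR (S n)); ring).
    eapply Rle_trans; [apply Rabs_triang|].
    rewrite Rabs_Ropp, !Rabs_mult, (Rabs_right 2) by lra.
    rewrite (Rabs_right (INR (S n))) by (apply Rle_ge, pos_INR).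
    assert (H1 : 2 * Rabs x * Rabs (hermite (S n) x) <= 2 * Rabs x * Y ^ S n).
    { apply Rmult_le_compat_l; [lra| exact IH2]. }
    assert (H2 : 2 * INR (S n) * Rabs (hermite n x) <= 2 * INR (S n) * Y ^ n).
    { apply Rmult_le_compat_l. pose proof (pos_INR (S n)); lra. lra. }
    assert (H3 : 2 * INR (S n) * Y ^ n <= Y * Y ^ n).
    { apply Rmult_le_compat_r; [apply pow_le; lra| lra]. }
    change (Y ^ S n) with (Y * Y ^ n) in *.
    change ((Y + 2) ^ S (S n)) with ((Y + 2) * (Y + 2) ^ S n).
    assert (H4 : 0 <= Y * Y ^ n) by (apply Rmult_le_pos; [lra|apply pow_le; lra]).
    change (Y * Y ^ n) with (Y ^ S n) in *.
    nra.
Qed.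

Lemma hermite_exp_bound n x :
  Rabs (hermite n x) <= INR (Factorial.fact n) * exp (2 * INR n) * exp (2 * Rabs x).
Proof.
  eapply Rle_trans; [apply hermite_bound_aux|].
  rewrite Rmult_assoc, <- exp_plus.
  eapply Rle_trans; [apply pow_le_fact_exp|].
  - pose proof (Rabs_pos x); pose proof (pos_INR n); lra.
  - right. f_equal. f_equal. ring.
Qed.

Lemma lim_exp_mabs_p : is_lim (fun x => exp (- Rabs x)) p_infty 0.
Proof.
  apply (is_lim_comp exp (fun x => - Rabs x) p_infty 0 m_infty).
  - apply is_lim_exp_m.
  - apply (is_lim_le_m_loc (fun y => - y)).
    + apply filter_forall. intro y. pose proof (Rle_abs y). lra.
    + apply (is_lim_opp (fun y => y) p_infty p_infty). apply is_lim_id.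
  - apply filter_forall. intros y H; discriminate.
Qed.

Lemma lim_exp_mabs_m : is_lim (fun x => exp (- Rabs x)) m_infty 0.
Proof.
  apply (is_lim_comp exp (fun x => - Rabs x) m_infty 0 m_infty).
  - apply is_lim_exp_m.
  - apply (is_lim_le_m_loc (fun y => y)).
    + apply filter_forall. intro y. pose proof (Rle_abs (- y)). rewrite Rabs_Ropp in H. lra.
    + apply is_lim_id.
  - apply filter_forall. intros y H; discriminate.
Qed.

Lemma lim_dominated (F : R -> R) (A : R) (z : Rbar) :
  (z = p_infty \/ z = m_infty) ->
  (forall x, Rabs (F x) <= A * exp (- Rabs x)) -> is_lim F z 0.
Proof.
  intros Hz HF.
  assert (Hl : is_lim (fun x => exp (- Rabs x)) z 0).
  { destruct Hz as [->| ->]; [apply lim_exp_mabs_p|apply lim_exp_mabs_m]. }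
  apply (is_lim_le_le_loc (fun x => - (A * exp (- Rabs x))) (fun x => A * exp (- Rabs x))).
  - apply filter_forall. intro x. pose proof (HF x). pose proof (Rle_abs (F x)). pose proof (Rle_abs (- F x)). rewrite Rabs_Ropp in *. split; lra.
  - assert (H := is_lim_scal_l _ A _ _ Hl). simpl in H. rewrite Rmult_0_r in H.
    assert (H' := is_lim_opp _ _ _ H). simpl in H'. rewrite Ropp_0 in H'. exact H'.
  - assert (H := is_lim_scal_l _ A _ _ Hl). simpl in H. rewrite Rmult_0_r in H. exact H.
Qed.
Definition gG (x : R) : R := RInt (fun t => exp (- (t ^ 2))) 0 x.

Lemma gauss_cont (t : R) : continuous (fun t => exp (- (t ^ 2))) t.
Proof.
  apply (@ex_derive_continuous R_AbsRing R_NormedModule). auto_derive; auto.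
Qed.

Lemma gauss_exRInt a b : ex_RInt (fun t => exp (- (t ^ 2))) a b.
Proof. apply (@ex_RInt_continuous R_CompleteNormedModule). intros; apply gauss_cont. Qed.

Lemma gG_deriv (x : R) : is_derive gG x (exp (- (x ^ 2))).
Proof.
  apply (is_derive_RInt (fun t => exp (- (t ^ 2))) gG 0 x).
  - apply filter_forall. intro b. unfold gG. apply (@RInt_correct R_CompleteNormedModule), gauss_exRInt.
  - apply gauss_cont.
Qed.

Lemma const_of_deriv0 (f : R -> R) :
  (forall x, is_derive f x 0) -> forall x y, f x = f y.
Proof.
  intros Hf x y.
  destruct (Rtotal_order x y) as [H|[H|H]].
  - apply (eq_is_derive f x y); auto.
  - subst; reflexivity.
  - symmetry. apply (eq_is_derive f y x); auto.
Qed.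

Definition F1 (x : R) : R := RInt (fun t => exp (- (x ^ 2 * (1 + t ^ 2))) / (1 + t ^ 2)) 0 1.

Lemma F1_deriv (x : R) : is_derive F1 x (- 2 * exp (- (x ^ 2)) * gG x).
Proof.
  assert (Hpos : forall t, 1 + t ^ 2 <> 0) by (intro t; nra).
  assert (HD : forall u t, Derive (fun z => exp (- (z ^ 2 * (1 + t ^ 2))) / (1 + t ^ 2)) u
                          = - 2 * u * exp (- (u ^ 2 * (1 + t ^ 2)))).
  { intros u t. apply is_derive_unique. eapply deriv_eq. { auto_derive; try solve [auto | apply Hpos]. }
    simpl. field. specialize (Hpos t). simpl in Hpos. lra. }
  eapply deriv_eq.
  { apply (is_derive_RInt_param (fun u t => exp (- (u ^ 2 * (1 + t ^ 2))) / (1 + t ^ 2)) 0 1 x).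
    - apply filter_forall. intros y t _. auto_derive. solve [auto | apply Hpos].
    - intros t _. eapply continuity_2d_pt_ext.
      { intros u v. symmetry. apply HD. }
      apply continuity_2d_pt_mult.
      + apply continuity_2d_pt_mult.
        * apply continuity_2d_pt_const.
        * apply continuity_2d_pt_id1.
      + apply (continuity_1d_2d_pt_comp exp (fun u v => - (u ^ 2 * (1 + v ^ 2)))).
        * apply derivable_continuous_pt, derivable_pt_exp.
        * apply continuity_2d_pt_opp.
          apply continuity_2d_pt_mult.
          { eapply continuity_2d_pt_ext. { intros u v. simpl. reflexivity. }
            apply continuity_2d_pt_mult; [apply continuity_2d_pt_id1|].
            apply continuity_2d_pt_mult; [apply continuity_2d_pt_id1|apply continuity_2d_pt_const]. }
          { apply continuity_2d_pt_plus; [apply continuity_2d_pt_const|].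
            eapply continuity_2d_pt_ext. { intros u v. simpl. reflexivity. }
            apply continuity_2d_pt_mult; [apply continuity_2d_pt_id2|].
            apply continuity_2d_pt_mult; [apply continuity_2d_pt_id2|apply continuity_2d_pt_const]. }
    - apply filter_forall. intros y. apply (@ex_RInt_continuous R_CompleteNormedModule). intros z _.
      apply (@ex_derive_continuous R_AbsRing R_NormedModule). auto_derive. solve [auto | apply Hpos]. }
  rewrite (RInt_ext _ (fun t => (- 2 * x * exp (- (x ^ 2))) * exp (- ((x * t + 0) ^ 2)))).
  2:{ intros t _. rewrite HD. rewrite (Rmult_assoc (-2 * x)), <- exp_plus. f_equal. f_equal. ring. }
  rewrite (RInt_ext _ (fun t => (- 2 * exp (- (x ^ 2))) * scal x (exp (- ((x * t + 0) ^ 2))))).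
  2:{ intros t _. unfold scal; simpl; unfold mult; simpl. ring. }
  rewrite (@RInt_scal R_CompleteNormedModule (fun t => scal x (exp (- ((x * t + 0) ^ 2))))).
  2:{ apply (@ex_RInt_continuous R_CompleteNormedModule). intros z _.
      apply (@ex_derive_continuous R_AbsRing R_NormedModule). apply (ex_derive_ext (fun t => x * exp (-((x*t+0)^2)))); [intro; reflexivity|]. auto_derive; auto. }
  assert (Hc := @RInt_comp_lin R_CompleteNormedModule (fun t => exp (- (t ^ 2))) x 0 0 1 (gauss_exRInt _ _)).
  replace (x*0+0) with 0 in Hc by ring. replace (x*1+0) with x in Hc by ring.
  unfold gG. unfold scal in *; simpl in *; unfold mult in *; simpl in *.
  rewrite Hc. ring.
Qed.

Lemma F1_0 : F1 0 = PI / 4.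
Proof.
  unfold F1.
  rewrite (RInt_ext _ (fun t => / (1 + t ^ 2))).
  2:{ intros t _. replace (- (0 ^ 2 * (1 + t ^ 2))) with 0 by ring. rewrite exp_0. unfold Rdiv. apply Rmult_1_l. }
  rewrite (is_RInt_unique _ 0 1 (minus (atan 1) (atan 0))).
  - rewrite atan_1, atan_0. unfold minus, plus, opp; simpl. ring.
  - apply (@is_RInt_derive R_CompleteNormedModule).
    + intros t _. apply is_derive_Reals. apply derivable_pt_lim_atan.
    + intros t _. apply (@ex_derive_continuous R_AbsRing R_NormedModule).
      auto_derive. simpl. nra.
Qed.

Lemma exp_mono x y : x <= y -> exp x <= exp y.
Proof. intros [H|H]; [left; apply exp_increasing; exact H| subst; right; reflexivity]. Qed.

Lemma F1_bounds (x : R) : 0 <= F1 x <= exp (- (x ^ 2)).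
Proof.
  assert (Hpos : forall t, 0 < 1 + t ^ 2) by (intro t; nra).
  assert (Hex : ex_RInt (fun t => exp (- (x ^ 2 * (1 + t ^ 2))) / (1 + t ^ 2)) 0 1).
  { apply (@ex_RInt_continuous R_CompleteNormedModule). intros z _.
    apply (@ex_derive_continuous R_AbsRing R_NormedModule). auto_derive.
    specialize (Hpos z). simpl in Hpos. lra. }
  split.
  - apply RInt_ge_0; [lra|exact Hex|]. intros t _.
    unfold Rdiv. apply Rmult_le_pos; [left; apply exp_pos|left; apply Rinv_0_lt_compat, Hpos].
  - eapply Rle_trans.
    + apply (RInt_le _ (fun _ => exp (- (x ^ 2)))); [lra|exact Hex| |].
      * apply ex_RInt_const.
      * intros t _. specialize (Hpos t).
        assert (H1 : exp (- (x ^ 2 * (1 + t ^ 2))) <= exp (- (x ^ 2))).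
        { apply exp_mono. nra. }
        assert (H2 : / (1 + t ^ 2) <= 1).
        { rewrite <- Rinv_1. apply Rinv_le_contravar; [lra|nra]. }
        pose proof (exp_pos (- (x ^ 2 * (1 + t ^ 2)))).
        unfold Rdiv. nra.
    + rewrite RInt_const. unfold scal; simpl; unfold mult; simpl. lra.
Qed.

Lemma gG_sq (x : R) : gG x ^ 2 = PI / 4 - F1 x.
Proof.
  assert (Hd : forall y : R, is_derive (fun x => F1 x + gG x ^ 2) y 0).
  { intro y. eapply deriv_eq.
    { apply (@is_derive_plus R_AbsRing R_NormedModule). apply F1_deriv.
      apply (is_derive_pow gG 2 y). apply gG_deriv. }
    unfold plus; simpl. ring. }
  assert (H := const_of_deriv0 _ Hd x 0). simpl in H.
  unfold gG in H. rewrite RInt_point in H. fold (gG x) in H. rewrite F1_0 in H.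
  unfold zero in H; simpl in H. lra.
Qed.

Lemma gG_ge0 (x : R) : 0 <= x -> 0 <= gG x.
Proof.
  intros Hx. apply RInt_ge_0; [lra|apply gauss_exRInt|]. intros; left; apply exp_pos.
Qed.

Lemma gG_odd (x : R) : gG (- x) = - gG x.
Proof.
  assert (Hd : forall y : R, is_derive (fun x => gG (- x) + gG x) y 0).
  { intro y. eapply deriv_eq.
    { apply (@is_derive_plus R_AbsRing R_NormedModule).
      - apply (is_derive_comp gG (fun x => - x)). apply gG_deriv.
        apply (@is_derive_opp R_AbsRing R_NormedModule (fun x => x)). apply is_derive_id.
      - apply gG_deriv. }
    unfold plus, scal, opp, one; simpl. unfold mult; simpl. replace (- y * (- y * 1)) with (y * (y * 1)) by (simpl; ring). simpl. ring. }
  assert (H := const_of_deriv0 _ Hd x 0). simpl in H.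
  replace (- 0) with 0 in H by ring.
  unfold gG at 3 4 in H. rewrite RInt_point in H. unfold zero in H; simpl in H. lra.
Qed.

Lemma F1_lim : is_lim F1 p_infty 0.
Proof.
  apply (lim_dominated F1 (exp (/ 4))). left; reflexivity.
  intro x. destruct (F1_bounds x) as [H1 H2].
  rewrite Rabs_right by lra. eapply Rle_trans; [exact H2|].
  rewrite <- exp_plus. apply exp_mono.
  assert (Hx : Rabs x ^ 2 = x ^ 2) by (simpl; rewrite !Rmult_1_r; rewrite <- Rabs_mult; apply Rabs_right; nra).
  pose proof (pow2_ge_0 (Rabs x - 1/2)). replace (/ 4) with (1/4) by field. nra.
Qed.

Lemma sqrtPI4 : sqrt (PI / 4) = sqrt PI / 2.
Proof.
  pose proof PI_RGT_0.
  rewrite <- (sqrt_pow2 (sqrt PI / 2)).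
  - f_equal. unfold Rdiv. rewrite Rpow_mult_distr, pow2_sqrt by lra. field.
  - pose proof (sqrt_pos PI). lra.
Qed.

Lemma gG_lim_p : is_lim gG p_infty (sqrt PI / 2).
Proof.
  apply (is_lim_ext_loc (fun x => sqrt (PI / 4 - F1 x))).
  - exists 0. intros x Hx. rewrite <- gG_sq. apply sqrt_pow2, gG_ge0. lra.
  - rewrite <- sqrtPI4.
    assert (H : is_lim (fun x => PI / 4 - F1 x) p_infty (PI / 4)).
    { assert (H0 := is_lim_minus' _ _ p_infty (PI / 4) 0 (is_lim_const _ _) F1_lim).
      rewrite Rminus_0_r in H0. exact H0. }
    unfold is_lim in *. simpl in *.
    eapply filterlim_comp. exact H. apply continuous_sqrt.
Qed.

Lemma gG_lim_m : is_lim gG m_infty (- (sqrt PI / 2)).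
Proof.
  apply (is_lim_ext (fun x => - gG (- x))).
  - intro x. rewrite gG_odd. ring.
  - apply (is_lim_opp (fun x => gG (- x)) m_infty (sqrt PI / 2)).
    apply (is_lim_comp gG (fun x => - x) m_infty (sqrt PI / 2) p_infty).
    + apply gG_lim_p.
    + apply (is_lim_opp (fun x => x) m_infty m_infty). apply is_lim_id.
    + apply filter_forall. intros y H; discriminate.
Qed.

Section S.
Variables (sg mu : R).
Hypothesis Hsg : 0 < sg.

Definition aa := (sg ^ 2 + 1) / (2 * sg ^ 2).
Definition bb := mu / sg ^ 2.
Definition ss := 2 * mu / (sg ^ 2 + 1).
Definition rr := (sg ^ 2 - 1) / (sg ^ 2 + 1).
Definition kap := - mu ^ 2 / (2 * (sg ^ 2 + 1)).
Definition mm := mu / (sg ^ 2 + 1).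
Definition EE (x : R) := exp (- x ^ 2 / 2 + - (x - mu) ^ 2 / (2 * sg ^ 2)).
Definition PP := exp kap / sqrt aa * (sqrt PI / 2).

Fixpoint bpair (n : nat) : R * R :=
  match n with
  | O => (1, ss)
  | S m => let p := bpair m in (snd p, ss * snd p + 2 * INR (S m) * rr * fst p)
  end.
Definition beta n := fst (bpair n).

Lemma beta_SS n : beta (S (S n)) = ss * beta (S n) + 2 * INR (S n) * rr * beta n.
Proof. reflexivity. Qed.

Lemma sg2_pos : 0 < sg ^ 2.
Proof. apply pow_lt; lra. Qed.

Lemma aa_pos : 0 < aa.
Proof. pose proof sg2_pos. unfold aa. apply Rdiv_lt_0_compat; lra. Qed.

Lemma EE_alt (x : R) : EE x = exp kap * exp (- ((sqrt aa * (x - mm)) ^ 2)).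
Proof.
  pose proof sg2_pos. pose proof aa_pos.
  unfold EE. rewrite <- exp_plus. f_equal.
  rewrite Rpow_mult_distr, pow2_sqrt by lra.
  unfold kap, aa, mm. field. lra.
Qed.

Lemma EE_deriv (x : R) : is_derive EE x ((bb - 2 * aa * x) * EE x).
Proof.
  pose proof sg2_pos.
  unfold EE. unfold Rdiv. eapply deriv_eq. { auto_derive; auto. }
  unfold bb, aa. simpl. simpl in H. match goal with |- _ * exp ?A = _ * exp ?B => replace B with A by (field; lra) end. field. lra.
Qed.

Lemma EE_pos (x : R) : 0 < EE x.
Proof. apply exp_pos. Qed.

Lemma EE_cont (x : R) : continuous EE x.
Proof. apply (@ex_derive_continuous R_AbsRing R_NormedModule). eexists; apply EE_deriv. Qed.

Lemma HE_bound n (x : R) :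
  Rabs (hermite n x * EE x) <= INR (Factorial.fact n) * exp (2 * INR n) * exp (9/2) * exp (- Rabs x).
Proof.
  pose proof sg2_pos.
  rewrite Rabs_mult, (Rabs_right (EE x)) by (left; apply EE_pos).
  pose proof (hermite_exp_bound n x) as Hb.
  assert (HE : EE x <= exp (- x ^ 2 / 2)).
  { unfold EE. apply exp_mono. assert (0 <= (x - mu) ^ 2 / (2 * sg ^ 2)).
    { apply Rmult_le_pos; [apply pow2_ge_0|left; apply Rinv_0_lt_compat; lra]. }
    lra. }
  eapply Rle_trans.
  { apply Rmult_le_compat; [apply Rabs_pos|left; apply EE_pos|exact Hb|exact HE]. }
  rewrite !Rmult_assoc. apply Rmult_le_compat_l; [apply pos_INR|].
  apply Rmult_le_compat_l; [left; apply exp_pos|].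
  rewrite <- !exp_plus. apply exp_mono.
  assert (Hx : Rabs x ^ 2 = x ^ 2) by (simpl; rewrite !Rmult_1_r; rewrite <- Rabs_mult; apply Rabs_right; nra).
  pose proof (pow2_ge_0 (Rabs x - 3)). nra.
Qed.

Lemma HE_lim n z : (z = p_infty \/ z = m_infty) -> is_lim (fun x => hermite n x * EE x) z 0.
Proof. intros Hz. eapply lim_dominated; [exact Hz|]. intro x. apply HE_bound. Qed.

Lemma lin_lim_p c m : 0 < c -> is_lim (fun x => c * (x - m)) p_infty p_infty.
Proof.
  intros Hc P [M HM]. exists (m + Rabs M / c). intros x Hx. apply HM.
  assert (H1 : Rabs M / c * c = Rabs M) by (field; lra).
  pose proof (Rle_abs M).
  assert (x - m > Rabs M / c) by lra.
  assert (c * (x - m) > c * (Rabs M / c)) by (apply Rmult_lt_compat_l; lra).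
  lra.
Qed.

Lemma lin_lim_m c m : 0 < c -> is_lim (fun x => c * (x - m)) m_infty m_infty.
Proof.
  intros Hc P [M HM]. exists (m - Rabs M / c). intros x Hx. apply HM.
  assert (H1 : Rabs M / c * c = Rabs M) by (field; lra).
  pose proof (Rle_abs (- M)). rewrite Rabs_Ropp in H.
  assert (m - x > Rabs M / c) by lra.
  assert (c * (m - x) > c * (Rabs M / c)) by (apply Rmult_lt_compat_l; lra).
  lra.
Qed.

Definition Psi0 x := exp kap / sqrt aa * gG (sqrt aa * (x - mm)).

Lemma Psi0_deriv (x : R) : is_derive Psi0 x (hermite 0 x * EE x).
Proof.
  pose proof aa_pos. assert (Hs : 0 < sqrt aa) by (apply sqrt_lt_R0; lra).
  unfold Psi0. eapply deriv_eq.
  { apply is_derive_scal. apply (is_derive_comp gG (fun x => sqrt aa * (x - mm))).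
    apply gG_deriv. eapply deriv_eq. { auto_derive; auto. } simpl. reflexivity. }
  rewrite hermite_0, EE_alt. unfold scal; simpl; unfold mult; simpl. field. lra.
Qed.

Lemma Psi0_lim_p : is_lim Psi0 p_infty PP.
Proof.
  pose proof aa_pos. assert (Hs : 0 < sqrt aa) by (apply sqrt_lt_R0; lra).
  unfold Psi0, PP.
  apply (is_lim_scal_l (fun x => gG (sqrt aa * (x - mm))) (exp kap / sqrt aa) p_infty (sqrt PI / 2)).
  apply (is_lim_comp gG (fun x => sqrt aa * (x - mm)) p_infty (sqrt PI / 2) p_infty).
  - apply gG_lim_p.
  - apply lin_lim_p; exact Hs.
  - apply filter_forall. intros y Hy; discriminate.
Qed.

Lemma Psi0_lim_m : is_lim Psi0 m_infty (- PP).
Proof.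
  pose proof aa_pos. assert (Hs : 0 < sqrt aa) by (apply sqrt_lt_R0; lra).
  unfold Psi0, PP.
  replace (- (exp kap / sqrt aa * (sqrt PI / 2))) with (exp kap / sqrt aa * (- (sqrt PI / 2))) by ring.
  apply (is_lim_scal_l (fun x => gG (sqrt aa * (x - mm))) (exp kap / sqrt aa) m_infty (- (sqrt PI / 2))).
  apply (is_lim_comp gG (fun x => sqrt aa * (x - mm)) m_infty (- (sqrt PI / 2)) m_infty).
  - apply gG_lim_m.
  - apply lin_lim_m; exact Hs.
  - apply filter_forall. intros y Hy; discriminate.
Qed.


Lemma ss_eq : ss = bb / aa.
Proof. pose proof sg2_pos. unfold ss, bb, aa. field. lra. Qed.

Lemma rr_eq : rr = / aa - 1.
Proof. pose proof sg2_pos. unfold rr, aa. field. lra. Qed.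

Lemma is_derive_mult_R (f g : R -> R) (x df dg : R) :
  is_derive f x df -> is_derive g x dg -> is_derive (fun t => f t * g t) x (df * g x + f x * dg).
Proof.
  intros Hf Hg. eapply deriv_eq. { apply (is_derive_mult f g x df dg Hf Hg). intros; apply Rmult_comm. }
  reflexivity.
Qed.

Lemma is_derive_plus_R (f g : R -> R) (x df dg : R) :
  is_derive f x df -> is_derive g x dg -> is_derive (fun t => f t + g t) x (df + dg).
Proof. intros Hf Hg. apply (@is_derive_plus R_AbsRing R_NormedModule); auto. Qed.

Lemma is_derive_minus_R (f g : R -> R) (x df dg : R) :
  is_derive f x df -> is_derive g x dg -> is_derive (fun t => f t - g t) x (df - dg).
Proof. intros Hf Hg. apply (@is_derive_minus R_AbsRing R_NormedModule); auto. Qed.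

Lemma is_lim_scal_fin (f : R -> R) z (l a : R) : is_lim f z l -> is_lim (fun y => a * f y) z (a * l).
Proof. intros H. apply (is_lim_scal_l f a z l) in H. exact H. Qed.

Lemma lim_comb (f g h : R -> R) z (lf lg c1 c2 c3 : R) :
  is_lim f z lf -> is_lim g z lg -> is_lim h z 0 ->
  is_lim (fun x => c1 * f x + c2 * g x - c3 * h x) z (c1 * lf + c2 * lg).
Proof.
  intros Hf Hg Hh.
  assert (H := is_lim_minus' _ _ z _ _ (is_lim_plus' _ _ z _ _ (is_lim_scal_fin f z lf c1 Hf)
                    (is_lim_scal_fin g z lg c2 Hg)) (is_lim_scal_fin h z 0 c3 Hh)).
  replace (c1 * lf + c2 * lg) with (c1 * lf + c2 * lg - c3 * 0) by ring. exact H.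
Qed.

Definition Sprop n := exists Psi : R -> R,
  (forall x : R, is_derive Psi x (hermite n x * EE x)) /\
  is_lim Psi p_infty (PP * beta n) /\ is_lim Psi m_infty (- (PP * beta n)).

Lemma Sprop_all n : Sprop n /\ Sprop (S n).
Proof.
  pose proof sg2_pos as Hs2. pose proof aa_pos as Ha.
  induction n as [|n [[Pa [Da [La1 La2]]] [Pb [Db [Lb1 Lb2]]]]].
  - split.
    + exists Psi0. split; [apply Psi0_deriv|]. unfold beta; simpl. rewrite Rmult_1_r.
      split; [apply Psi0_lim_p|apply Psi0_lim_m].
    + exists (fun x => ss * Psi0 x + 0 * Psi0 x - / aa * (hermite 0 x * EE x)). split.
      * intro x. eapply deriv_eq.
        { apply is_derive_minus_R.
          { apply is_derive_plus_R; apply is_derive_scal; apply Psi0_deriv. }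
          { apply is_derive_scal. apply is_derive_mult_R; [apply hermite_deriv|apply EE_deriv]. } }
        rewrite hermite_1, hermite_0. simpl pred. rewrite ss_eq. simpl. field. lra.
      * unfold beta; simpl. split.
        -- replace (PP * ss) with (ss * PP + 0 * PP) by ring.
           apply lim_comb; [apply Psi0_lim_p|apply Psi0_lim_p|apply HE_lim; auto].
        -- replace (- (PP * ss)) with (ss * (- PP) + 0 * (- PP)) by ring.
           apply lim_comb; [apply Psi0_lim_m|apply Psi0_lim_m|apply HE_lim; auto].
  - split; [exists Pb; auto|].
    exists (fun x => ss * Pb x + (2 * INR (S n) * rr) * Pa x - / aa * (hermite (S n) x * EE x)). split.
    + intro x. eapply deriv_eq.
      { apply is_derive_minus_R.
        { apply is_derive_plus_R; apply is_derive_scal; [apply Db|apply Da]. }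
        { apply is_derive_scal. apply is_derive_mult_R; [apply hermite_deriv|apply EE_deriv]. } }
      rewrite (hermite_SS n x). simpl pred. rewrite ss_eq, rr_eq. field. lra.
    + rewrite beta_SS. split.
      * replace (PP * (ss * beta (S n) + 2 * INR (S n) * rr * beta n)) with
          (ss * (PP * beta (S n)) + (2 * INR (S n) * rr) * (PP * beta n)) by ring.
        apply lim_comb; [apply Lb1|apply La1|apply HE_lim; auto].
      * replace (- (PP * (ss * beta (S n) + 2 * INR (S n) * rr * beta n))) with
          (ss * (- (PP * beta (S n))) + (2 * INR (S n) * rr) * (- (PP * beta n))) by ring.
        apply lim_comb; [apply Lb2|apply La2|apply HE_lim; auto].
Qed.

Lemma HE_RInt_gen n :
  is_RInt_gen (fun x => hermite n x * EE x) (Rbar_locally m_infty) (Rbar_locally p_infty)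
    (2 * PP * beta n).
Proof.
  destruct (Sprop_all n) as [[Psi [D [L1 L2]]] _].
  assert (HD : forall x, Derive Psi x = hermite n x * EE x) by (intro; apply is_derive_unique, D).
  eapply is_RInt_gen_ext.
  - apply filter_forall. intros ab x _. apply HD.
  - replace (2 * PP * beta n) with (PP * beta n - - (PP * beta n)) by ring.
    apply is_RInt_gen_Derive.
    + apply filter_forall. intros ab x _. eexists; apply D.
    + apply filter_forall. intros ab x _. eapply continuous_ext.
      { intro y. symmetry. apply HD. }
      apply (@continuous_mult R_UniformSpace R_AbsRing); [apply hermite_cont|apply EE_cont].
    + exact L2.
    + exact L1.
Qed.

End S.

Lemma alpha_formula sg mu n : 0 < sg ->
  alpha sg mu n = (/ sqrt (sqrt PI * 2 ^ n * INR (Factorial.fact n)) * / sqrt (2 * PI * sg ^ 2))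
                  * (2 * PP sg mu * beta sg mu n).
Proof.
  intros Hsg.
  assert (H : is_RInt_gen (fun x => hermite_fun n x * gauss sg mu x) (Rbar_locally m_infty) (Rbar_locally p_infty)
    ((/ sqrt (sqrt PI * 2 ^ n * INR (Factorial.fact n)) * / sqrt (2 * PI * sg ^ 2))
                  * (2 * PP sg mu * beta sg mu n))).
  { eapply is_RInt_gen_ext.
    2:{ apply (@is_RInt_gen_scal R_NormedModule _ _ _ _ (fun x => hermite n x * EE sg mu x) (/ sqrt (sqrt PI * 2 ^ n * INR (Factorial.fact n)) * / sqrt (2 * PI * sg ^ 2)) (2 * PP sg mu * beta sg mu n)).
        apply HE_RInt_gen. exact Hsg. }
    apply filter_forall. intros ab x _.
    unfold hermite_fun, gauss, EE, scal; simpl; unfold mult; simpl.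
    rewrite exp_plus. ring. }
  unfold alpha. exact (@is_RInt_gen_unique R_CompleteNormedModule _ _ _ _ _ _ H).
Qed.

Fixpoint uu (r : R) (i : nat) : R :=
  match i with
  | O => 1
  | S O => 0
  | S (S j) => 2 * r * uu r j / INR (S (S j))
  end.

Definition gg (r s : R) (n i : nat) : R := uu r i * s ^ (n - i) / INR (Factorial.fact (n - i)).
Definition ff (r s : R) (n : nat) : R := sum_f_R0 (gg r s n) n.

Lemma INR_S_pos n : 0 < INR (S n).
Proof. apply lt_0_INR; lia. Qed.

Lemma ff_rec r s n : INR (S (S n)) * ff r s (S (S n)) = s * ff r s (S n) + 2 * r * ff r s n.
Proof.
  unfold ff.
  rewrite scal_sum.
  rewrite (sum_eq _ (fun i => INR i * gg r s (S (S n)) i + INR (S (S n) - i) * gg r s (S (S n)) i)).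
  2:{ intros i Hi. rewrite minus_INR by exact Hi. ring. }
  rewrite plus_sum.
  assert (HA : sum_f_R0 (fun i => INR i * gg r s (S (S n)) i) (S (S n)) = 2 * r * sum_f_R0 (gg r s n) n).
  { rewrite decomp_sum by lia. simpl pred. rewrite decomp_sum by lia. simpl pred.
    rewrite scal_sum.
    replace (INR 0 * gg r s (S (S n)) 0) with 0 by (simpl; ring).
    replace (INR 1 * gg r s (S (S n)) 1) with 0 by (unfold gg; simpl uu; unfold Rdiv; ring).
    rewrite Rplus_0_l, Rplus_0_l. apply sum_eq. intros i Hi.
    unfold gg. change (uu r (S (S i))) with (2 * r * uu r i / INR (S (S i))). replace (S (S n) - S (S i))%nat with (n - i)%nat by reflexivity.
    field. split; [apply INR_fact_neq_0|]. pose proof (INR_S_pos (S i)). lra. }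
  assert (HB : sum_f_R0 (fun i => INR (S (S n) - i) * gg r s (S (S n)) i) (S (S n)) = s * sum_f_R0 (gg r s (S n)) (S n)).
  { rewrite tech5. rewrite Nat.sub_diag. simpl INR at 2. rewrite Rmult_0_l, Rplus_0_r.
    rewrite scal_sum. apply sum_eq. intros i Hi.
    unfold gg. replace (S (S n) - i)%nat with (S (S n - i)) by lia.
    rewrite fact_simpl, mult_INR. simpl pow.
    pose proof (INR_S_pos (S n - i)). pose proof (INR_fact_neq_0 (S n - i)).
    field. lra. }
  rewrite HA, HB. ring.
Qed.

Lemma ff_0 r s : ff r s 0 = 1.
Proof. unfold ff, gg. simpl. field. Qed.

Lemma ff_1 r s : ff r s 1 = s.
Proof. unfold ff, gg. simpl. field. Qed.

Lemma closed_form (r s : R) (b : nat -> R) :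
  b 0%nat = 1 -> b 1%nat = s ->
  (forall n, b (S (S n)) = s * b (S n) + 2 * INR (S n) * r * b n) ->
  forall n, b n = INR (Factorial.fact n) * ff r s n.
Proof.
  intros H0 H1 HS.
  assert (forall n, b n = INR (Factorial.fact n) * ff r s n /\ b (S n) = INR (Factorial.fact (S n)) * ff r s (S n)).
  { induction n as [|n [IH1 IH2]].
    - rewrite H0, H1, ff_0, ff_1. simpl. split; ring.
    - split; [exact IH2|]. rewrite HS, IH1, IH2.
      assert (Hr := ff_rec r s n).
      rewrite (fact_simpl (S n)), mult_INR, (fact_simpl n), mult_INR.
      rewrite (fact_simpl n), mult_INR in IH2.
      replace (INR (S (S n)) * (INR (S n) * INR (Factorial.fact n)) * ff r s (S (S n)))
        with (INR (S n) * INR (Factorial.fact n) * (INR (S (S n)) * ff r s (S (S n)))) by ring.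
      rewrite Hr. ring. }
  intro n. apply H.
Qed.

Lemma uu_bound r k : INR (Factorial.fact k) * uu r k ^ 2 <= 2 ^ k * Rabs r ^ k.
Proof.
  assert (forall i : nat, INR (Factorial.fact i) * uu r i ^ 2 <= 2 ^ i * Rabs r ^ i /\
                    INR (Factorial.fact (S i)) * uu r (S i) ^ 2 <= 2 ^ (S i) * Rabs r ^ (S i)).
  { intro i. induction i as [|i [IH1 IH2]].
    - simpl. split; [lra|]. pose proof (Rabs_pos r). nra.
    - split; [exact IH2|].
      change (uu r (S (S i))) with (2 * r * uu r i / INR (S (S i))).
      rewrite (fact_simpl (S i)), mult_INR, (fact_simpl i), mult_INR.
      pose proof (INR_S_pos (S i)) as P2. pose proof (INR_S_pos i) as P1.
      assert (Hq : INR (S (S i)) * (INR (S i) * INR (Factorial.fact i)) * (2 * r * uu r i / INR (S (S i))) ^ 2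
                   = (4 * r ^ 2) * (INR (S i) / INR (S (S i))) * (INR (Factorial.fact i) * uu r i ^ 2)).
      { field. lra. }
      rewrite Hq.
      assert (Hf : INR (S i) / INR (S (S i)) <= 1).
      { apply Rmult_le_reg_r with (INR (S (S i))); [lra|]. unfold Rdiv. rewrite Rmult_assoc, Rinv_l by lra.
        rewrite (S_INR (S i)). lra. }
      assert (Hf0 : 0 <= INR (S i) / INR (S (S i))) by (apply Rmult_le_pos; [lra|left; apply Rinv_0_lt_compat; lra]).
      assert (Hp : 0 <= INR (Factorial.fact i) * uu r i ^ 2).
      { apply Rmult_le_pos; [apply pos_INR|apply pow2_ge_0]. }
      assert (Hr2 : r ^ 2 = Rabs r ^ 2) by (simpl; rewrite !Rmult_1_r, <- Rabs_mult; symmetry; apply Rabs_right; nra).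
      replace (2 ^ S (S i) * Rabs r ^ S (S i)) with (4 * Rabs r ^ 2 * (2 ^ i * Rabs r ^ i)) by (simpl; ring).
      rewrite Hr2.
      assert (H4 : 0 <= 4 * Rabs r ^ 2) by (pose proof (pow2_ge_0 (Rabs r)); lra).
      apply Rle_trans with (4 * Rabs r ^ 2 * 1 * (INR (Factorial.fact i) * uu r i ^ 2)).
      + apply Rmult_le_compat_r; [exact Hp|]. apply Rmult_le_compat_l; [exact H4|exact Hf].
      + rewrite Rmult_1_r. apply Rmult_le_compat_l; [exact H4|exact IH1]. }
  apply H.
Qed.

Lemma pos_sum (w : nat -> R) n : (forall i, (i <= n)%nat -> 0 < w i) -> 0 < sum_f_R0 w n.
Proof.
  induction n as [|n IH]; intros Hw.
  - simpl. apply Hw. lia.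
  - rewrite tech5. assert (0 < sum_f_R0 w n) by (apply IH; intros; apply Hw; lia).
    assert (0 < w (S n)) by (apply Hw; lia). lra.
Qed.

Lemma cs_sum (z w : nat -> R) n : (forall i, (i <= n)%nat -> 0 < w i) ->
  (sum_f_R0 z n) ^ 2 <= sum_f_R0 w n * sum_f_R0 (fun i => z i ^ 2 / w i) n.
Proof.
  induction n as [|n IH]; intros Hw.
  - simpl. assert (0 < w 0%nat) by (apply Hw; lia). right. field. lra.
  - rewrite !tech5.
    assert (IH' := IH (fun i Hi => Hw i (le_S _ _ Hi))).
    assert (HW : 0 < sum_f_R0 w n) by (apply pos_sum; intros; apply Hw; lia).
    assert (Hwz : 0 < w (S n)) by (apply Hw; lia).
    set (Z := sum_f_R0 z n) in *. set (W := sum_f_R0 w n) in *.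
    set (P := sum_f_R0 (fun i => z i ^ 2 / w i) n) in *.
    set (zz := z (S n)) in *. set (wz := w (S n)) in *.
    assert (E1 : zz ^ 2 / wz * wz = zz ^ 2) by (field; lra).
    assert (K : 2 * Z * zz <= W * (zz ^ 2 / wz) + wz * P).
    { apply Rmult_le_reg_l with (W * wz); [nra|].
      replace (W * wz * (W * (zz ^ 2 / wz) + wz * P)) with (W * (W * zz ^ 2) + W * wz ^ 2 * P) by (field; lra).
      assert (H1 : wz ^ 2 * Z ^ 2 <= W * wz ^ 2 * P).
      { replace (W * wz ^ 2 * P) with (wz ^ 2 * (W * P)) by ring.
        apply Rmult_le_compat_l; [apply pow2_ge_0|exact IH']. }
      pose proof (pow2_ge_0 (W * zz - wz * Z)). nra. }
    assert (E2 : (W + wz) * (P + zz ^ 2 / wz) = W * P + W * (zz ^ 2 / wz) + wz * P + zz ^ 2) by (field; lra).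
    rewrite E2. nra.
Qed.

Lemma sum_rev (F : nat -> R) n : sum_f_R0 (fun i => F (n - i)%nat) n = sum_f_R0 F n.
Proof.
  induction n as [|n IH].
  - reflexivity.
  - rewrite decomp_sum by lia. simpl pred. rewrite Nat.sub_0_r.
    replace (sum_f_R0 (fun i => F (S n - S i)%nat) n) with (sum_f_R0 (fun i => F (n - i)%nat) n) by reflexivity.
    rewrite IH, tech5. ring.
Qed.

Lemma exp_partial_le (c : R) n : 0 <= c -> sum_f_R0 (fun k => c ^ k / INR (Factorial.fact k)) n <= exp c.
Proof. apply exp_ge_taylor. Qed.

Lemma C_pos n i : (i <= n)%nat -> 0 < Binomial.C n i.
Proof.
  intros _. unfold Binomial.C. apply Rdiv_lt_0_compat; [apply INR_fact_lt_0|].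
  apply Rmult_lt_0_compat; apply INR_fact_lt_0.
Qed.

Lemma term_bound (r s tau : R) n i : r <> 0 -> 0 < tau -> (i <= n)%nat ->
  (gg r s n i * INR (Factorial.fact n)) ^ 2 / (Binomial.C n i * Rabs r ^ i * tau ^ (n - i))
  <= INR (Factorial.fact n) * 2 ^ n * ((s ^ 2 / (2 * tau)) ^ (n - i) / INR (Factorial.fact (n - i))).
Proof.
  intros Hr Ht Hi.
  set (k := (n - i)%nat).
  assert (Hn : n = (i + k)%nat) by (unfold k; lia).
  assert (Hra : 0 < Rabs r) by (apply Rabs_pos_lt; exact Hr).
  assert (Hri : 0 < Rabs r ^ i) by (apply pow_lt; exact Hra).
  assert (Htk : 0 < tau ^ k) by (apply pow_lt; exact Ht).
  assert (Hfk := INR_fact_lt_0 k). assert (Hfi := INR_fact_lt_0 i). assert (Hfn := INR_fact_lt_0 n).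
  assert (Hsk : (s ^ k) ^ 2 = (s ^ 2) ^ k) by (rewrite <- !pow_mult; f_equal; lia).
  assert (E : (gg r s n i * INR (Factorial.fact n)) ^ 2 / (Binomial.C n i * Rabs r ^ i * tau ^ k)
              = INR (Factorial.fact n) * ((INR (Factorial.fact i) * uu r i ^ 2) / Rabs r ^ i) * ((s ^ 2) ^ k / (INR (Factorial.fact k) * tau ^ k))).
  { unfold gg, Binomial.C. fold k. rewrite <- Hsk. field. lra. }
  rewrite E.
  assert (Hu := uu_bound r i).
  assert (Hu' : (INR (Factorial.fact i) * uu r i ^ 2) / Rabs r ^ i <= 2 ^ i).
  { apply Rmult_le_reg_r with (Rabs r ^ i); [exact Hri|]. unfold Rdiv. rewrite Rmult_assoc, Rinv_l by lra. lra. }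
  assert (Hq : 0 <= (s ^ 2) ^ k / (INR (Factorial.fact k) * tau ^ k)).
  { apply Rmult_le_pos; [apply pow_le, pow2_ge_0|left; apply Rinv_0_lt_compat; nra]. }
  apply Rle_trans with (INR (Factorial.fact n) * 2 ^ i * ((s ^ 2) ^ k / (INR (Factorial.fact k) * tau ^ k))).
  { apply Rmult_le_compat_r; [exact Hq|]. apply Rmult_le_compat_l; [lra|exact Hu']. }
  right. replace (2 ^ n) with (2 ^ i * 2 ^ k) by (rewrite Hn, pow_add; reflexivity).
  unfold Rdiv. rewrite Rpow_mult_distr, <- Rinv_pow by lra. rewrite Rpow_mult_distr.
  assert (0 < 2 ^ k) by (apply pow_lt; lra). field. lra.
Qed.

Lemma beta_bound (r s tau : R) (b : nat -> R) n : r <> 0 -> 0 < tau ->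
  b 0%nat = 1 -> b 1%nat = s ->
  (forall n, b (S (S n)) = s * b (S n) + 2 * INR (S n) * r * b n) ->
  b n ^ 2 <= 2 ^ n * INR (Factorial.fact n) * (Rabs r + tau) ^ n * exp (s ^ 2 / (2 * tau)).
Proof.
  intros Hr Ht H0 H1 HS.
  rewrite (closed_form r s b H0 H1 HS n). unfold ff. rewrite scal_sum.
  eapply Rle_trans.
  { apply (cs_sum _ (fun i => Binomial.C n i * Rabs r ^ i * tau ^ (n - i)) n).
    intros i Hi. assert (Hra : 0 < Rabs r) by (apply Rabs_pos_lt; exact Hr).
    apply Rmult_lt_0_compat; [apply Rmult_lt_0_compat; [apply C_pos; exact Hi|apply pow_lt; lra]|apply pow_lt; lra]. }
  rewrite <- binomial.
  assert (Hc : 0 <= s ^ 2 / (2 * tau)) by (apply Rmult_le_pos; [apply pow2_ge_0|left; apply Rinv_0_lt_compat; lra]).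
  assert (HB : sum_f_R0 (fun i => (gg r s n i * INR (Factorial.fact n)) ^ 2 / (Binomial.C n i * Rabs r ^ i * tau ^ (n - i))) n
               <= INR (Factorial.fact n) * 2 ^ n * exp (s ^ 2 / (2 * tau))).
  { eapply Rle_trans. { apply sum_Rle. intros i Hi. apply term_bound; auto. }
    rewrite (sum_eq _ (fun i => ((s ^ 2 / (2 * tau)) ^ (n - i) / INR (Factorial.fact (n - i))) * (INR (Factorial.fact n) * 2 ^ n))) by (intros; ring).
    rewrite <- scal_sum.
    apply Rmult_le_compat_l. { apply Rmult_le_pos; [apply pos_INR|apply pow_le; lra]. }
    rewrite (sum_rev (fun k => (s ^ 2 / (2 * tau)) ^ k / INR (Factorial.fact k)) n).
    apply exp_partial_le. exact Hc. }
  assert (Hp : 0 <= (Rabs r + tau) ^ n) by (apply pow_le; pose proof (Rabs_pos r); lra).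
  eapply Rle_trans. { apply Rmult_le_compat_l; [exact Hp|exact HB]. }
  right. ring.
Qed.

Lemma exp_pow_nat x n : exp x ^ n = exp (x * INR n).
Proof.
  induction n as [|n IH].
  - simpl. rewrite Rmult_0_r, exp_0. reflexivity.
  - rewrite S_INR. simpl. rewrite IH, <- exp_plus. f_equal. ring.
Qed.

Lemma beta_rec sg mu : forall n,
  beta sg mu (S (S n)) = ss sg mu * beta sg mu (S n) + 2 * INR (S n) * rr sg * beta sg mu n.
Proof. intro n. apply beta_SS. Qed.

Lemma beta_tail sg mu n : 0 < sg -> N_bound sg mu <= INR n ->
  beta sg mu n ^ 2 <= 2 ^ n * INR (Factorial.fact n) * exp (- 2 * lam sg) ^ n.
Proof.
  intros Hsg HN.
  assert (Hs2 : 0 < sg ^ 2) by (apply pow_lt; lra).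
  assert (Hn0 : 0 <= INR n) by apply pos_INR.
  assert (Hf := INR_fact_lt_0 n).
  assert (H2n : 0 < 2 ^ n) by (apply pow_lt; lra).
  unfold N_bound, lam in *.
  destruct (Req_EM_T (sg ^ 2) 1) as [E1|E1].
  -
    assert (Hr0 : rr sg = 0) by (unfold rr; rewrite E1; field).
    assert (Hs : ss sg mu = mu) by (unfold ss; rewrite E1; field).
    assert (Hb : forall n, beta sg mu n = mu ^ n /\ beta sg mu (S n) = mu ^ (S n)).
    { induction n0 as [|k [IH1 IH2]].
      - unfold beta; simpl. split; [reflexivity|]. rewrite Hs. ring.
      - split; [exact IH2|]. rewrite beta_rec, IH1, IH2, Hr0, Hs. simpl. ring. }
    rewrite (proj1 (Hb n)).
    assert (Hmu : mu ^ 2 <= 2 * INR n * exp (- (3 / 2))).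
    { rewrite exp_Ropp. pose proof (exp_pos (3/2)).
      apply Rmult_le_reg_r with (exp (3 / 2)); [lra|].
      replace (2 * INR n * / exp (3 / 2) * exp (3 / 2)) with (2 * INR n) by (field; lra). lra. }
    rewrite <- pow_mult, Nat.mul_comm, pow_mult.
    eapply Rle_trans. { apply pow_incr. split; [apply pow2_ge_0|exact Hmu]. }
    rewrite !Rpow_mult_distr.
    assert (Hnn := pow_le_fact_exp (INR n) n Hn0).
    assert (Hq : exp (INR n) * exp (- (3 / 2)) ^ n = exp (- 2 * / 4) ^ n).
    { rewrite !exp_pow_nat, <- exp_plus. replace (-2 * / 4 * INR n) with (INR n + - (3 / 2) * INR n) by field. reflexivity. }
    rewrite <- Hq.
    assert (0 <= exp (- (3 / 2)) ^ n) by (apply pow_le; left; apply exp_pos).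
    replace (2 ^ n * INR (Factorial.fact n) * (exp (INR n) * exp (- (3 / 2)) ^ n))
      with (2 ^ n * exp (- (3 / 2)) ^ n * (INR (Factorial.fact n) * exp (INR n))) by ring.
    replace (2 ^ n * INR n ^ n * exp (- (3 / 2)) ^ n) with (2 ^ n * exp (- (3 / 2)) ^ n * INR n ^ n) by ring.
    apply Rmult_le_compat_l; [nra|exact Hnn].
  -
    assert (Hp : 0 < sg ^ 2 + 1) by lra.
    assert (Hd : 0 < Rabs (sg ^ 2 - 1)) by (apply Rabs_pos_lt; lra).
    assert (HY : Rabs ((sg ^ 2 + 1) / (sg ^ 2 - 1)) = (sg ^ 2 + 1) / Rabs (sg ^ 2 - 1)).
    { unfold Rdiv. rewrite Rabs_mult, Rabs_inv. rewrite (Rabs_right (sg ^ 2 + 1)) by lra. reflexivity. }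
    assert (H4 : Rabs (sg ^ 4 - 1) = (sg ^ 2 + 1) * Rabs (sg ^ 2 - 1)).
    { replace (sg ^ 4 - 1) with ((sg ^ 2 + 1) * (sg ^ 2 - 1)) by ring.
      rewrite Rabs_mult, (Rabs_right (sg ^ 2 + 1)) by lra. reflexivity. }
    assert (Hr : Rabs (rr sg) = Rabs (sg ^ 2 - 1) / (sg ^ 2 + 1)).
    { unfold rr. unfold Rdiv. rewrite Rabs_mult, Rabs_inv. rewrite (Rabs_right (sg ^ 2 + 1)) by lra. reflexivity. }
    assert (Hs2' : ss sg mu ^ 2 = 4 * mu ^ 2 / (sg ^ 2 + 1) ^ 2) by (unfold ss; field; lra).
    rewrite HY in *. rewrite H4 in HN.
    set (p := sg ^ 2 + 1) in *. set (d := Rabs (sg ^ 2 - 1)) in *.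
    assert (Hdp : d < p).
    { unfold d, p. unfold Rabs; destruct Rcase_abs; lra. }
    set (L := ln (p / d)).
    assert (HL : 0 < L).
    { unfold L. rewrite <- ln_1. apply ln_increasing; [lra|].
      apply Rmult_lt_reg_r with d; [lra|]. unfold Rdiv. rewrite Rmult_assoc, Rinv_l by lra. lra. }
    assert (HeL : exp (- L) = d / p).
    { rewrite exp_Ropp. unfold L. rewrite exp_ln by (apply Rdiv_lt_0_compat; lra). field; lra. }
    assert (Hr0 : rr sg <> 0).
    { intro Hc. rewrite Hc, Rabs_R0 in Hr. assert (0 < d / p) by (apply Rdiv_lt_0_compat; lra). lra. }
    set (tau := exp (- L) * (exp (L / 4) - 1)).
    assert (Htau : exp (- L) * (L / 4) <= tau).
    { unfold tau. apply Rmult_le_compat_l; [left; apply exp_pos|]. pose proof (exp_ineq1_le (L / 4)). lra. }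
    assert (Htau0 : 0 < tau).
    { pose proof (exp_pos (- L)). assert (0 < exp (- L) * (L / 4)) by nra. lra. }
    assert (Hbb := beta_bound (rr sg) (ss sg mu) tau (beta sg mu) n Hr0 Htau0 eq_refl eq_refl (beta_rec sg mu)).
    eapply Rle_trans; [exact Hbb|].
    assert (Hsum : Rabs (rr sg) + tau = exp (- L) * exp (L / 4)).
    { rewrite Hr, <- HeL. unfold tau. ring. }
    rewrite Hsum.
    assert (Hc : ss sg mu ^ 2 / (2 * tau) <= L * INR n / 4).
    { apply Rmult_le_reg_r with (2 * tau); [lra|].
      unfold Rdiv at 1. rewrite Rmult_assoc, Rinv_l, Rmult_1_r by lra.
      assert (HN' : 32 * mu ^ 2 <= INR n * (L ^ 2 * (p * d))).
      { assert (0 < L ^ 2) by (apply pow_lt; lra).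
        assert (X : 32 * mu ^ 2 = (32 * mu ^ 2 / (p * d) * / L ^ 2) * (L ^ 2 * (p * d))) by (field; lra).
        rewrite X. apply Rmult_le_compat_r; [left; apply Rmult_lt_0_compat; [lra|apply Rmult_lt_0_compat; lra]|exact HN]. }
      rewrite Hs2'.
      apply Rle_trans with (L * INR n / 4 * (2 * (exp (- L) * (L / 4)))).
      2:{ apply Rmult_le_compat_l; [apply Rmult_le_pos; [nra|lra]|lra]. }
      rewrite HeL.
      apply Rmult_le_reg_r with (p ^ 2); [apply pow_lt; lra|].
      replace (4 * mu ^ 2 / p ^ 2 * p ^ 2) with (4 * mu ^ 2) by (field; lra).
      replace (L * INR n / 4 * (2 * (d / p * (L / 4))) * p ^ 2) with (INR n * (L ^ 2 * (p * d)) / 8) by (field; lra).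
      lra. }
    assert (Hq : exp (- 2 * (/ 4 * L)) ^ n = exp (- (L / 2) * INR n)).
    { rewrite exp_pow_nat. replace (- 2 * (/ 4 * L) * INR n) with (- (L / 2) * INR n) by field. reflexivity. }
    fold L. rewrite Hq.
    rewrite Rpow_mult_distr, !exp_pow_nat, <- exp_plus.
    rewrite (Rmult_assoc (2 ^ n * INR (Factorial.fact n))).
    apply Rmult_le_compat_l; [apply Rmult_le_pos; lra|].
    rewrite <- exp_plus. apply exp_mono. nra.
Qed.

Definition Kc sg mu := exp (kap sg mu) ^ 2 / (sqrt PI * (sg ^ 2 + 1)).

Lemma alpha_sq sg mu n : 0 < sg ->
  alpha sg mu n ^ 2 = Kc sg mu * (beta sg mu n ^ 2 / (2 ^ n * INR (Factorial.fact n))).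
Proof.
  intros Hsg. rewrite alpha_formula by exact Hsg.
  assert (Hs2 : 0 < sg ^ 2) by (apply pow_lt; lra).
  assert (HPI := PI_RGT_0).
  assert (HsP : 0 < sqrt PI) by (apply sqrt_lt_R0; lra).
  assert (Hf := INR_fact_lt_0 n).
  assert (H2n : 0 < 2 ^ n) by (apply pow_lt; lra).
  assert (HX : 0 < sqrt PI * 2 ^ n * INR (Factorial.fact n)) by (apply Rmult_lt_0_compat; [apply Rmult_lt_0_compat|]; lra).
  assert (HY : 0 < 2 * PI * sg ^ 2) by (apply Rmult_lt_0_compat; lra).
  assert (Ha : 0 < aa sg) by (apply aa_pos; exact Hsg).
  assert (HA := pow2_sqrt _ (Rlt_le _ _ HX)).
  assert (HB := pow2_sqrt _ (Rlt_le _ _ HY)).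
  assert (HC := pow2_sqrt _ (Rlt_le _ _ Ha)).
  assert (HD := pow2_sqrt _ (Rlt_le _ _ HPI)).
  assert (HA0 : 0 < sqrt (sqrt PI * 2 ^ n * INR (Factorial.fact n))) by (apply sqrt_lt_R0; lra).
  assert (HB0 : 0 < sqrt (2 * PI * sg ^ 2)) by (apply sqrt_lt_R0; lra).
  assert (HC0 : 0 < sqrt (aa sg)) by (apply sqrt_lt_R0; lra).
  unfold PP, Kc.
  unfold Rdiv. rewrite !Rpow_mult_distr, !pow_inv, HA, HB, HC, HD.
  unfold aa. field. split; lra.
Qed.

Lemma lam_pos sg : 0 < sg -> 0 < lam sg.
Proof.
  intros Hsg. assert (Hs2 : 0 < sg ^ 2) by (apply pow_lt; lra).
  unfold lam. destruct (Req_EM_T (sg ^ 2) 1) as [E|E]; [lra|].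
  apply Rmult_lt_0_compat; [lra|].
  assert (Hd : 0 < Rabs (sg ^ 2 - 1)) by (apply Rabs_pos_lt; lra).
  assert (HY : Rabs ((sg ^ 2 + 1) / (sg ^ 2 - 1)) = (sg ^ 2 + 1) / Rabs (sg ^ 2 - 1)).
  { unfold Rdiv. rewrite Rabs_mult, Rabs_inv. rewrite (Rabs_right (sg ^ 2 + 1)) by lra. reflexivity. }
  rewrite HY. rewrite <- ln_1. apply ln_increasing; [lra|].
  assert (Hdp : Rabs (sg ^ 2 - 1) < sg ^ 2 + 1) by (unfold Rabs; destruct Rcase_abs; lra).
  apply Rmult_lt_reg_r with (Rabs (sg ^ 2 - 1)); [lra|]. unfold Rdiv. rewrite Rmult_assoc, Rinv_l by lra. lra.
Qed.

Theorem lemma4p9 (sigma mu : R) (N : nat) :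
  0 < sigma -> (1 <= N)%nat -> N_bound sigma mu <= INR N ->
  sqrt (Series (fun k => (alpha sigma mu (N + k)) ^ 2))
  <= / (Rpower PI (1 / 4) * sqrt ((sigma ^ 2 + 1) * (1 - exp (- 2 * lam sigma))))
     * exp (- mu ^ 2 / (2 * (sigma ^ 2 + 1)) - lam sigma * INR N).
Proof.
  intros Hs HN1 HNb.
  assert (Hs2 : 0 < sigma ^ 2) by (apply pow_lt; lra).
  assert (Hl := lam_pos sigma Hs).
  set (q := exp (- 2 * lam sigma)).
  assert (Hq0 : 0 < q) by apply exp_pos.
  assert (Hq1 : q < 1) by (unfold q; rewrite <- exp_0; apply exp_increasing; lra).
  assert (HPI := PI_RGT_0).
  assert (HsP : 0 < sqrt PI) by (apply sqrt_lt_R0; lra).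
  assert (HK : 0 <= Kc sigma mu).
  { unfold Kc. apply Rmult_le_pos; [apply pow2_ge_0|left; apply Rinv_0_lt_compat; apply Rmult_lt_0_compat; lra]. }
  assert (HqN : 0 < q ^ N) by (apply pow_lt; lra).
  assert (Hterm : forall k, 0 <= alpha sigma mu (N + k) ^ 2 <= Kc sigma mu * q ^ N * q ^ k).
  { intro k. split; [apply pow2_ge_0|].
    rewrite alpha_sq by exact Hs.
    set (n := (N + k)%nat).
    assert (Hn : N_bound sigma mu <= INR n).
    { eapply Rle_trans; [exact HNb|]. apply le_INR. unfold n; lia. }
    assert (Hb := beta_tail sigma mu n Hs Hn). fold q in Hb.
    assert (Hf := INR_fact_lt_0 n).
    assert (H2n : 0 < 2 ^ n) by (apply pow_lt; lra).
    rewrite Rmult_assoc, <- pow_add. fold n.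
    apply Rmult_le_compat_l; [exact HK|].
    apply Rmult_le_reg_r with (2 ^ n * INR (Factorial.fact n)); [apply Rmult_lt_0_compat; lra|].
    unfold Rdiv. rewrite Rmult_assoc, Rinv_l by (apply Rgt_not_eq, Rmult_lt_0_compat; lra).
    rewrite Rmult_1_r. eapply Rle_trans; [exact Hb|]. right; ring. }
  assert (Hgeom : is_series (fun k => Kc sigma mu * q ^ N * q ^ k) (Kc sigma mu * q ^ N * / (1 - q))).
  { apply (is_series_scal_l (Kc sigma mu * q ^ N) (fun k => q ^ k)). apply is_series_geom.
    rewrite Rabs_right; lra. }
  assert (Hser : Series (fun k => alpha sigma mu (N + k) ^ 2) <= Kc sigma mu * q ^ N * / (1 - q)).
  { rewrite <- (is_series_unique _ _ Hgeom). apply Series_le; [exact Hterm|eexists; exact Hgeom]. }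
  eapply Rle_trans; [apply sqrt_le_1_alt; exact Hser|].
  set (RHS := / (Rpower PI (1 / 4) * sqrt ((sigma ^ 2 + 1) * (1 - q))) *
     exp (- mu ^ 2 / (2 * (sigma ^ 2 + 1)) - lam sigma * INR N)).
  assert (Hrp : Rpower PI (1 / 4) ^ 2 = sqrt PI).
  { simpl. rewrite Rmult_1_r, <- Rpower_plus, <- Rpower_sqrt by lra. f_equal. field. }
  assert (Hrp0 : 0 < Rpower PI (1 / 4)) by (unfold Rpower; apply exp_pos).
  assert (Hsq0 : 0 < (sigma ^ 2 + 1) * (1 - q)) by (apply Rmult_lt_0_compat; lra).
  assert (Hsq : sqrt ((sigma ^ 2 + 1) * (1 - q)) ^ 2 = (sigma ^ 2 + 1) * (1 - q)) by (apply pow2_sqrt; lra).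
  assert (Hsq1 : 0 < sqrt ((sigma ^ 2 + 1) * (1 - q))) by (apply sqrt_lt_R0; lra).
  assert (HR0 : 0 <= RHS).
  { unfold RHS. apply Rmult_le_pos; [left; apply Rinv_0_lt_compat, Rmult_lt_0_compat; lra|left; apply exp_pos]. }
  assert (HR2 : RHS ^ 2 = Kc sigma mu * q ^ N * / (1 - q)).
  { unfold RHS, Kc, q, kap.
    replace (- mu ^ 2 / (2 * (sigma ^ 2 + 1)) - lam sigma * INR N) with (- mu ^ 2 / (2 * (sigma ^ 2 + 1)) + - (lam sigma * INR N)) by ring. rewrite exp_plus.
    rewrite !Rpow_mult_distr, !pow_inv, !Rpow_mult_distr, Hrp. fold q. rewrite Hsq.
    assert (Hl2 : exp (- (lam sigma * INR N)) ^ 2 = q ^ N).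
    { unfold q. rewrite !exp_pow_nat. f_equal. simpl. ring. }
    rewrite Hl2. field. split; lra. }
  rewrite <- HR2, sqrt_pow2 by exact HR0. right; reflexivity.
Qed.
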